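(* Let $F$ be an imaginary quadratic field other than $\mathbb{Q}(\sqrt{-1})$ and $\mathbb{Q}(\sqrt{-3})$, $\Gamma\subset\mathrm{SL}_2(F)$ an arithmetic subgroup, $P$ a parabolic subgroup of $\mathrm{Res}_{F/\mathbb{Q}}(\mathrm{SL}_{2/F})$ with unipotent radical $U_P$, and $R$ a ring in which $2$ is invertible. Put $\Gamma_P=\Gamma\cap P(\mathbb{Q})$ and $\Gamma_{U_P}=\Gamma\cap U_P(\mathbb{Q})$. Then $H^1(\Gamma_P,R)\cong H^1(\Gamma_{U_P},R)$.
   Context: Group cohomology with trivial coefficients $R$, so $H^1(\cdot,R)=\mathrm{Hom}(\cdot,R)$. *)

(* Defs.v *)
From HB Require Import structures.
From mathcomp Require Import all_boot all_order all_algebra all_field.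
Set Implicit Arguments. Unset Strict Implicit. Unset Printing Implicit Defensive.
Import Order.TTheory GRing.Theory Num.Theory.
Local Open Scope ring_scope.

Notation M2 := ('M[algC]_2).

Definition squarefree_nat (d : nat) : Prop :=
  (0 < d)%N /\ forall p : nat, prime p -> ~~ (p * p %| d)%N.

Definition inF (d : nat) (z : algC) : Prop :=
  exists a b : rat, z = ratr a + ratr b * sqrtC (- (d%:R)).

Definition inOF (d : nat) (z : algC) : Prop := inF d z /\ z \in Aint.

Definition SL2 (K : algC -> Prop) (x : M2) : Prop :=
  (forall i j, K (x i j)) /\ \det x = 1.

Definition is_subgroup_SL2F (d : nat) (G : M2 -> Prop) : Prop :=
  (forall x, G x -> SL2 (inF d) x) /\ G 1 /\
  (forall x y, G x -> G y -> G (x * y)) /\ (forall x, G x -> G (invmx x)).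

Definition finite_index (H G : M2 -> Prop) : Prop :=
  exists s : seq M2, (forall t, t \in s -> G t) /\
    forall g, G g -> exists2 t, t \in s & H (invmx t * g).

(* arithmetic subgroup: commensurable with SL_2(O_F) *)
Definition arithmetic_subgroup (d : nat) (G : M2 -> Prop) : Prop :=
  is_subgroup_SL2F d G /\
  finite_index (fun x => G x /\ SL2 (inOF d) x) G /\
  finite_index (fun x => G x /\ SL2 (inOF d) x) (SL2 (inOF d)).

(* Given g in GL_2(F), the Q-points of the (proper) parabolic subgroup
   P = g B g^-1 of Res_{F/Q} SL_2 (B = upper triangular Borel) and of its
   unipotent radical U_P = g N g^-1 (N = upper unipotent). *)
Definition is_GL2F (d : nat) (g : M2) : Prop :=
  (forall i j, inF d (g i j)) /\ g \in unitmx.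

Definition parabolic_pts (d : nat) (g : M2) (x : M2) : Prop :=
  exists b : M2, SL2 (inF d) b /\ b ord_max ord0 = 0 /\ x = g * b * invmx g.

Definition unipotent_radical_pts (d : nat) (g : M2) (x : M2) : Prop :=
  exists b : M2, SL2 (inF d) b /\ b ord_max ord0 = 0 /\
    b ord0 ord0 = 1 /\ b ord_max ord_max = 1 /\ x = g * b * invmx g.

(* H^1(S, R) = Hom(S, R) (trivial coefficients), for a subgroup S given as
   a predicate on M2; homomorphisms are represented as functions on M2
   normalized to be 0 outside S. *)
Definition H1 (S : M2 -> Prop) (R : pzRingType) : Type :=
  { phi : M2 -> R | (forall x y, S x -> S y -> phi (x * y) = phi x + phi y)
                    /\ (forall x, ~ S x -> phi x = 0) }.

Definition H1_iso (R : pzRingType) (S1 S2 : M2 -> Prop)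
  (f : H1 S1 R -> H1 S2 R) : Prop :=
  bijective f /\
  (forall phi psi chi : H1 S1 R,
     (forall x, sval chi x = sval phi x + sval psi x) ->
     forall x, sval (f chi) x = sval (f phi) x + sval (f psi) x) /\
  (forall (r : R) (phi chi : H1 S1 R),
     (forall x, sval chi x = r * sval phi x) ->
     forall x, sval (f chi) x = r * sval (f phi) x).

(* Main.v *)
Require Import Defs.
From HB Require Import structures.
From mathcomp Require Import all_boot all_order all_algebra all_field.
From mathcomp Require Import ring lra zify.
From Stdlib Require Import IndefiniteDescription ClassicalEpsilon FunctionalExtensionality ProofIrrelevance.
Set Implicit Arguments. Unset Strict Implicit. Unset Printing Implicit Defensive.
Import Order.TTheory GRing.Theory Num.Theory.
Local Open Scope ring_scope.

Lemma I2P (i : 'I_2) : i = ord0 \/ i = ord_max.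
Proof. case: i => [[|[|//]]] ? ; [left|right]; exact: val_inj. Qed.

Lemma sum2 (F : 'I_2 -> algC) : \sum_(i < 2) F i = F ord0 + F ord_max.
Proof.
rewrite big_ord_recl big_ord_recl big_ord0 addr0; congr (_ + F _); exact: val_inj.
Qed.

Lemma mul2 (A B : M2) i j :
  (A * B) i j = A i ord0 * B ord0 j + A i ord_max * B ord_max j.
Proof. by rewrite -mulmxE mxE sum2. Qed.

Lemma det2 (A : M2) : \det A = A ord0 ord0 * A ord_max ord_max - A ord0 ord_max * A ord_max ord0.
Proof.
rewrite (expand_det_row _ ord0) sum2 /cofactor !det_mx11 !mxE /=.
have -> : lift ord0 0 = ord_max :> 'I_2 by exact: val_inj.
have -> : lift ord_max 0 = ord0 :> 'I_2 by exact: val_inj.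
rewrite /= expr0 expr1 !mul1r mulN1r. ring.
Qed.

Lemma tr2 (A : M2) : \tr A = A ord0 ord0 + A ord_max ord_max.
Proof. by rewrite /mxtrace sum2. Qed.

Lemma adj2 (A : M2) i j : exists e : bool, exists k l, (\adj A) i j = (-1) ^+ e * A k l.
Proof.
rewrite /adjugate mxE /cofactor det_mx11 !mxE.
exists (odd (j + i)); do 2 eexists; by rewrite -signr_odd.
Qed.

Lemma conjCD (x y : algC) : (x + y)^* = x^* + y^*.
Proof. exact: rmorphD. Qed.
Lemma conjCM (x y : algC) : (x * y)^* = x^* * y^*.
Proof. exact: rmorphM. Qed.

Section NT.
Variable d : nat.
Hypothesis d_gt0 : (0 < d)%N.
Local Notation s := (sqrtC (- (d%:R)) : algC).

Lemma ss : s * s = - d%:R.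
Proof. by rewrite -expr2 sqrtCK. Qed.

Lemma conj_s : s^* = - s.
Proof.
have h : (s^* - s) * (s^* + s) = 0.
  have e : s^* * s^* = - d%:R.
    by rewrite -rmorphM ss rmorphN rmorph_nat.
  transitivity (s^* * s^* - s * s); first ring.
  by rewrite e ss subrr.
move/eqP: h; rewrite mulf_eq0 => /orP[/eqP h|]; last by rewrite addr_eq0 => /eqP.
have : 0 <= s * s^* by apply: mul_conjC_ge0.
have -> : s^* = s by apply/eqP; rewrite -subr_eq0 h.
rewrite ss oppr_ge0 => h2.
have : (0 < d%:R :> algC) by rewrite ltr0n.
move=> h3; move: (lt_le_trans h3 h2); by rewrite ltxx.
Qed.

Lemma inF_conj w : inF d w -> exists ra rb : rat,
  w = ratr ra + ratr rb * s /\ w^* = ratr ra - ratr rb * s.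
Proof.
case=> ra [rb ->]; exists ra, rb; split => //.
rewrite conjCD (conjCM (ratr rb)) !(conj_Crat (Crat_rat _)) conj_s; ring.
Qed.

Lemma inF0 : inF d 0.
Proof. exists 0, 0; by rewrite rmorph0 mul0r addr0. Qed.
Lemma inF1 : inF d 1.
Proof. exists 1, 0; by rewrite rmorph0 rmorph1 mul0r addr0. Qed.
Lemma inFD x y : inF d x -> inF d y -> inF d (x + y).
Proof.
case=> a1 [b1 ->] [a2 [b2 ->]]; exists (a1 + a2), (b1 + b2).
rewrite !rmorphD; ring.
Qed.
Lemma inFN x : inF d x -> inF d (- x).
Proof.
case=> a1 [b1 ->]; exists (- a1), (- b1).
rewrite !rmorphN; ring.
Qed.
Lemma inFM x y : inF d x -> inF d y -> inF d (x * y).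
Proof.
case=> a1 [b1 ->] [a2 [b2 ->]]; exists (a1 * a2 - d%:R * b1 * b2), (a1 * b2 + a2 * b1).
transitivity (ratr a1 * ratr a2 + (ratr a1 * ratr b2 + ratr a2 * ratr b1) * s
   + ratr b1 * ratr b2 * (s * s)); first ring.
rewrite ss; ring.
Qed.
Lemma inFX x n : inF d x -> inF d (x ^+ n).
Proof. move=> h; elim: n => [|n IH]; first by rewrite expr0; exact: inF1.
by rewrite exprS; apply: inFM. Qed.

Lemma inF_Aint_int w : inF d w -> w \in Aint ->
  (w + w^* \in Num.int) /\ (w * w^* \in Num.int).
Proof.
move=> /inF_conj [ra [rb [e1 e2]]] wA.
have cA : w^* \in Aint by rewrite Aint_aut.
split; apply: Cint_rat_Aint.
- have -> : w + w^* = ratr (ra + ra) by rewrite e2 e1; ring.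
  exact: Crat_rat.
- exact: rpredD.
- have -> : w * w^* = ratr (ra * ra + d%:R * rb * rb).
    rewrite e2 e1.
    transitivity (ratr ra * ratr ra - ratr rb * ratr rb * (s * s) : algC); first ring.
    rewrite ss; ring.
  exact: Crat_rat.
- exact: rpredM.
Qed.
End NT.

Lemma sqf_int (d : nat) (B : rat) (c : int) : squarefree_nat d ->
  d%:R * B ^+ 2 = c%:~R -> B = (numq B)%:~R.
Proof.
move=> [d0 sq] h.
set n := numq B; set q := denq B.
have q0 : q != 0 by rewrite gt_eqF // denq_gt0.
have q0' : (q%:~R : rat) != 0 by rewrite intr_eq0.
have Bq : B * q%:~R = n%:~R by rewrite -(divq_num_den B) mulfVK.
have ei : (d%:Z * n ^+ 2) = c * q ^+ 2.
  apply: (@intr_inj rat).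
  transitivity (d%:R * (B * q%:~R) ^+ 2 : rat); first by rewrite Bq; ring.
  transitivity ((d%:R * B ^+ 2) * (q%:~R) ^+ 2 : rat); first ring.
  rewrite h; ring.
have en : (d * `|n| ^ 2 = `|c| * `|q| ^ 2)%N.
  by move: (congr1 absz ei); rewrite !abszM absz_nat !expnS expn0 !muln1 => ->.
have cop := coprime_num_den B; rewrite -/n -/q in cop.
suff q1 : q = 1 by rewrite -[LHS](divq_num_den B) -/q -/n q1 divr1.
have q1 : (1 <= `|q|)%N by rewrite absz_gt0.
case: (ltnP 1 `|q|) => [qgt|qle]; last first.
  have : `|q|%N = 1%N by apply/eqP; rewrite eqn_leq qle q1.
  move=> e1; have : (`|q|%N)%:Z = 1 by rewrite e1.
  by rewrite abszE gtr0_norm ?denq_gt0.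
set p := pdiv `|q|.
have pp : prime p := pdiv_prime qgt.
have pq : (p %| `|q|)%N := pdiv_dvd _.
have cpn : coprime p `|n|.
  apply: (coprime_dvdl pq); by rewrite coprime_sym.
have : (p * p %| d * `|n| ^ 2)%N.
  rewrite en; apply: dvdn_mull; rewrite expnS expn1; exact: dvdn_mul.
have cp2 : coprime (p * p) (`|n| ^ 2) by rewrite mulnn coprimeXl // coprimeXr.
rewrite mulnC (Gauss_dvdr _ cp2) => hd.
by move: (sq p pp); rewrite hd.
Qed.

Lemma ratr_inj : injective (ratr : rat -> algC).
Proof. exact: fmorph_inj. Qed.

Lemma unitF d w v : squarefree_nat d -> d <> 1%N -> d <> 3%N -> inF d w ->
  w \in Aint -> v \in Aint -> w * v = 1 -> w = 1 \/ w = -1.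
Proof.
move=> hsq hd1 hd3 wF wA vA wv.
have d0 := hsq.1.
have [ra [rb [e1 e2]]] := inF_conj d0 wF.
have [i1 i2] := inF_Aint_int d0 wF wA.
have cA : v * v^* \in Aint by rewrite rpredM // Aint_aut.
have NM : (w * w^*) * (v * v^*) = 1.
  have h : w^* * v^* = 1 by rewrite -conjCM wv rmorph1.
  transitivity ((w * v) * (w^* * v^*)); first ring.
  by rewrite wv h mulr1.
have [n en] := intrP i2.
have nz : (n%:~R : algC) != 0.
  by apply/eqP => h0; move: NM; rewrite en h0 mul0r => /eqP; rewrite eq_sym oner_eq0.
have Mrat : v * v^* \in Crat.
  have -> : v * v^* = (n%:~R)^-1.
    by rewrite -[LHS](mulKf nz) -en NM mulr1.
  by rewrite rpredV rpred_int.
have [m em] := intrP (Cint_rat_Aint Mrat cA).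
have nm : n * m = 1.
  by apply: (@intr_inj algC); rewrite intrM -en -em NM.
have n0 : 0 <= n by have := mul_conjC_ge0 w; rewrite en ler0z.
have n1 : n = 1.
  case: (lerP m 0) => m0; nia.
have [k ek] := intrP i1.
have rak : ra + ra = k%:~R.
  apply: ratr_inj; rewrite rmorph_int -ek e2 e1; ring.
have rN : ra * ra + d%:R * rb * rb = 1.
  have N1 : w * w^* = 1 by rewrite en n1.
  apply: ratr_inj; rewrite rmorph1 -N1 e2 e1.
  transitivity (ratr ra * ratr ra - ratr rb * ratr rb * (sqrtC (- (d%:R)) * sqrtC (- (d%:R))) : algC); last by ring.
  rewrite ss; ring.
set B := rb + rb.
have hB : d%:R * B ^+ 2 = (4 - k ^+ 2)%:~R.
  transitivity (4 * (ra * ra + d%:R * rb * rb) - (ra + ra) ^+ 2); first by rewrite /B; ring.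
  rewrite rN rak; ring.
have eb := sqf_int hsq hB.
set b := numq B in eb.
have ei : k ^+ 2 + d%:Z * b ^+ 2 = 4.
  apply: (@intr_inj rat).
  transitivity ((ra + ra) ^+ 2 + d%:R * B ^+ 2 : rat); first by rewrite rak eb; ring.
  transitivity (4 * (ra * ra + d%:R * rb * rb)); first by rewrite /B; ring.
  rewrite rN; ring.
have d4 : d <> 4%N by move=> e; have := hsq.2 2 isT; rewrite e.
have d2 : (2 <= d)%N by lia.
have kc : (k <= -2) \/ (k = -1) \/ (k = 0) \/ (k = 1) \/ (2 <= k) by lia.
have b0 : b = 0.
  have : (b <= -2) \/ (b = -1) \/ (b = 0) \/ (b = 1) \/ (2 <= b) by lia.
  case => [bl|[eb1|[//|[eb1|bl]]]]; move: ei; rewrite ?eb1; 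
  case: kc => [kl|[->|[->|[->|kl]]]]; nia.
have rb0 : rb = 0.
  have : B = 0 by rewrite eb -/b b0.
  rewrite /B => h; lra.
have : k = 2 \/ k = -2.
  move: ei; rewrite b0; case: kc => [kl|[->|[->|[->|kl]]]]; nia.
case=> ke; [left|right]; rewrite e1 rb0 rmorph0 mul0r addr0; move: rak; rewrite ke.
- move=> h; have -> : ra = 1 by lra.
  by rewrite rmorph1.
- move=> h; have -> : ra = -1 by lra.
  by rewrite rmorphN rmorph1.
Qed.

Lemma sum4 (F : nat -> algC) : \sum_(i < 4) F i = F 0%N + F 1%N + F 2%N + F 3%N.
Proof. by rewrite !big_ord_recr big_ord0 /= add0r. Qed.

Lemma rootF d T z : (0 < d)%N -> inF d T -> T \in Aint ->
  z * z - T * z + 1 = 0 -> z \in Aint.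
Proof.
move=> d0 TF TA hz.
have [i1 i2] := inF_Aint_int d0 TF TA.
set t1 := T + T^* in i1; set t2 := T * T^* in i2.
have e1 : t1 = T + T^* by []. have e2 : t2 = T * T^* by []. clearbody t1 t2.
pose c := [:: 1; - t1; 2 + t2; - t1].
pose p : {poly algC} := 'X^4 + \poly_(i < 4) c`_i.
apply: (@root_monic_Aint p).
- rewrite /root /p hornerD hornerXn horner_poly (sum4 (fun i => c`_i * z ^+ i)) /=.
  apply/eqP.
  transitivity ((z * z - T * z + 1) * (z * z - T^* * z + 1)); first by rewrite e1 e2; ring.
  by rewrite hz mul0r.
- rewrite monicE /p lead_coefDl ?lead_coefXn // size_polyXn.
  exact: leq_ltn_trans (size_poly _ _) _.
- rewrite /p; apply/polyOverP => i; rewrite coefD coefXn coef_poly /c.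
  case: i => [|[|[|[|[|i]]]]] /=; rewrite ?add0r ?addr0 ?rpredN ?rpredD ?rpred1 ?rpred0 ?rpred_nat //.

Qed.
Lemma conj_pow (g b : M2) k : g \in unitmx ->
  (g * b * invmx g) ^+ k = g * b ^+ k * invmx g.
Proof.
move=> gu; elim: k => [|k IH].
  by rewrite !expr0 mulr1 -mulmxE mulmxV // idmxE.
rewrite exprS IH exprS.
have h : invmx g * g = 1 by rewrite -mulmxE mulVmx // idmxE.
transitivity (g * b * (invmx g * g) * b ^+ k * invmx g); first by rewrite !mulrA.
by rewrite h mulr1 !mulrA.
Qed.

Lemma tr_conj (g B : M2) : g \in unitmx -> \tr (g * B * invmx g) = \tr B.
Proof.
move=> gu; rewrite -!mulmxE mxtrace_mulC mulmxA mulVmx // mul1mx //.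
Qed.

Lemma one2 (i j : 'I_2) : (1 : M2) i j = (i == j)%:R.
Proof. by rewrite -idmxE mxE. Qed.

Lemma tri_pow (b : M2) k : b ord_max ord0 = 0 ->
  [/\ (b ^+ k) ord_max ord0 = 0, (b ^+ k) ord0 ord0 = b ord0 ord0 ^+ k
    & (b ^+ k) ord_max ord_max = b ord_max ord_max ^+ k].
Proof.
move=> b10; elim: k => [|k [h1 h2 h3]].
  by rewrite !expr0 !one2.
rewrite !exprS !mul2 h1 h2 h3 b10; split; ring.
Qed.

Lemma adj_Aint (A : M2) i j : (forall k l, A k l \in Aint) -> (\adj A) i j \in Aint.
Proof.
move=> h; have [e [k [l ->]]] := adj2 A i j.
by rewrite rpredM ?rpredX ?rpredN ?rpred1 ?h.
Qed.

Lemma mul_Aint (A B : M2) : (forall k l, A k l \in Aint) -> (forall k l, B k l \in Aint) ->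
  forall i j, (A * B) i j \in Aint.
Proof. by move=> hA hB i j; rewrite mul2 rpredD ?rpredM ?hA ?hB. Qed.

Lemma pow_Aint d (G : M2 -> Prop) x : arithmetic_subgroup d G -> G x ->
  exists2 k, (0 < k)%N & forall i j, (x ^+ k) i j \in Aint.
Proof.
move=> [[Gsl [G1 [GM GV]]] [[s [sG sH]] _]] Gx.
have Gp : forall i, G (x ^+ i).
  by elim=> [|i IH]; rewrite ?expr0 // exprS; apply: GM.
pose H y := G y /\ SL2 (inOF d) y.
have key : forall i j t, (i < j)%N -> H (invmx t * x ^+ i) -> H (invmx t * x ^+ j) ->
    exists2 k, (0 < k)%N & forall i j, (x ^+ k) i j \in Aint.
  move=> i j t lij [_ [M1A M1d]] [_ [M2A M2d]].
  exists (j - i)%N; first by rewrite subn_gt0.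
  set M1 := invmx t * x ^+ i in M1A M1d *.
  have e2 : invmx t * x ^+ j = M1 * x ^+ (j - i).
    by rewrite /M1 -mulrA -exprD subnKC // ltnW.
  have -> : x ^+ (j - i) = \adj M1 * (invmx t * x ^+ j).
    rewrite e2 mulrA -mulmxE mul_adj_mx M1d mul1mx //.
  apply: mul_Aint => k l; last by case: (M2A k l).
  by apply: adj_Aint => k' l'; case: (M1A k' l').
have ch : forall i : 'I_(size s).+1, {t | t \in s /\ H (invmx t * x ^+ i)}.
  move=> i; apply: constructive_indefinite_description.
  by have [t ts ht] := sH _ (Gp i); exists t.
pose f (i : 'I_(size s).+1) : 'I_(size s) :=
  Ordinal (etrans (index_mem _ _) (proj1 (proj2_sig (ch i)))).
have : ~~ injectiveb f.
  apply/negP => /injectiveP inj; have := @leq_card _ _ f inj.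
  by rewrite !card_ord ltnn.
case/injectivePn => i [j nij fij].
have tij : sval (ch i) = sval (ch j).
  have := congr1 (@nat_of_ord _) fij => /= e.
  by rewrite -(nth_index 0 (proj1 (proj2_sig (ch i)))) e nth_index // (proj1 (proj2_sig (ch j))).
case: (ltngtP i j) => [lt|lt|eq]; last by move: nij; rewrite (val_inj eq) eqxx.
- apply: (key i j (sval (ch i))) => //; first exact: (proj2 (proj2_sig (ch i))).
  rewrite tij; exact: (proj2 (proj2_sig (ch j))).
- apply: (key j i (sval (ch j))) => //; first exact: (proj2 (proj2_sig (ch j))).
  rewrite -tij; exact: (proj2 (proj2_sig (ch i))).
Qed.

Lemma diag_pm d (G : M2 -> Prop) (g x b : M2) : squarefree_nat d -> d <> 1%N -> d <> 3%N ->
  arithmetic_subgroup d G -> g \in unitmx -> G x -> SL2 (inF d) b ->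
  b ord_max ord0 = 0 -> x = g * b * invmx g ->
  b ord0 ord0 = b ord_max ord_max /\ (b ord0 ord0 = 1 \/ b ord0 ord0 = -1).
Proof.
move=> hsq hd1 hd3 hG gu Gx [bF bdet] b10 ex.
have d0 := hsq.1.
set a := b ord0 ord0; set c := b ord_max ord_max.
have ac : a * c = 1 by move: bdet; rewrite det2 b10 mulr0 subr0.
have [k k0 kA] := pow_Aint hG Gx.
have [t1 t2 t3] := tri_pow k b10.
set z := a ^+ k; set w := c ^+ k.
have zw : z * w = 1 by rewrite /z /w -exprMn ac expr1n.
have TA : z + w \in Aint.
  have : \tr (x ^+ k) = z + w by rewrite ex conj_pow // tr_conj // tr2 t2 t3.
  by move <-; rewrite tr2 rpredD.
have TF : inF d (z + w) by apply: inFD; apply: inFX; apply: bF.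
have zA : z \in Aint.
  apply: (rootF d0 TF TA).
  transitivity (1 - z * w); first ring. by rewrite zw subrr.
have wA : w \in Aint.
  have TF' : inF d (w + z) by rewrite addrC.
  have TA' : w + z \in Aint by rewrite addrC.
  apply: (rootF d0 TF' TA').
  transitivity (1 - z * w); first ring. by rewrite zw subrr.
have zF : inF d z by apply: inFX; apply: bF.
have zpm := unitF hsq hd1 hd3 zF zA wA zw.
have wz : w = z.
  transitivity (z * z * w); last by rewrite -mulrA zw mulr1.
  by case: zpm => ->; ring.
have k2 : (0 < k * 2)%N by rewrite muln_gt0 k0.
have aA : a \in Aint.
  apply: (Aint_unity_root k2); rewrite unity_rootE exprM -/z.
  by case: zpm => ->; rewrite ?expr1n ?sqrrN ?expr1n.
have cA : c \in Aint.
  apply: (Aint_unity_root k2); rewrite unity_rootE exprM -/w wz.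
  by case: zpm => ->; rewrite ?expr1n ?sqrrN ?expr1n.
have apm : a = 1 \/ a = -1 := unitF hsq hd1 hd3 (bF _ _) aA cA ac.
split => //.
transitivity (a * a * c); first by rewrite -mulrA ac mulr1.
by case: apm => ->; rewrite ?mul1r // mulrNN !mul1r.
Qed.

Lemma SL2_mul d (b b' : M2) : SL2 (inF d) b -> SL2 (inF d) b' -> SL2 (inF d) (b * b').
Proof.
move=> [bF bd] [bF' bd']; split.
  by move=> i j; rewrite mul2; apply: inFD; apply: inFM.
by rewrite -mulmxE det_mulmx bd bd' mulr1.
Qed.

Lemma conj_mul (g b b' : M2) : g \in unitmx ->
  (g * b * invmx g) * (g * b' * invmx g) = g * (b * b') * invmx g.
Proof.
move=> gu; have h : invmx g * g = 1 by rewrite -mulmxE mulVmx // idmxE.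
transitivity (g * b * (invmx g * g) * b' * invmx g); first by rewrite !mulrA.
by rewrite h mulr1 !mulrA.
Qed.

Lemma H1eq (S : M2 -> Prop) (R : pzRingType) (a b : H1 S R) :
  (forall x, sval a x = sval b x) -> a = b.
Proof.
case: a b => [fa pa] [fb pb] /= h.
have e := functional_extensionality _ _ h; subst fb.
by rewrite (proof_irrelevance _ pa pb).
Qed.

Definition dec (P : Prop) : {P} + {~ P} := excluded_middle_informative P.

Section Iso.
Variables (d : nat) (G : M2 -> Prop) (g : M2) (R : pzRingType) (u : R).
Hypotheses (hsq : squarefree_nat d) (hd1 : d <> 1%N) (hd3 : d <> 3%N)
  (hG : arithmetic_subgroup d G) (gu : g \in unitmx) (hu2 : u * 2%:R = 1).

Local Notation SP := (fun x => G x /\ parabolic_pts d g x).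
Local Notation SU := (fun x => G x /\ unipotent_radical_pts d g x).

Lemma GM x y : G x -> G y -> G (x * y).
Proof. by case: hG => [[_ [_ [h _]]] _]; apply: h. Qed.

Lemma SU_SP x : SU x -> SP x.
Proof. by case=> Gx [b [bS [b10 [_ [_ e]]]]]; split => //; exists b. Qed.

Lemma SP_form x : SP x -> exists b : M2, [/\ SL2 (inF d) b, b ord_max ord0 = 0,
  b ord0 ord0 = b ord_max ord_max & x = g * b * invmx g].
Proof.
case=> Gx [b [bS [b10 e]]]; exists b; split => //.
by case: (diag_pm hsq hd1 hd3 hG gu Gx bS b10 e).
Qed.

Lemma SP_mul x y : SP x -> SP y -> SP (x * y).
Proof.
case=> Gx [b [bS [b10 ex]]] [Gy [b' [bS' [b10' ey]]]]; split; first exact: GM.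
exists (b * b'); split; first exact: SL2_mul.
split; first by rewrite mul2 b10 b10'; ring.
by rewrite ex ey conj_mul.
Qed.

Lemma SU_mul x y : SU x -> SU y -> SU (x * y).
Proof.
case=> Gx [b [bS [b10 [b00 [b11 ex]]]]] [Gy [b' [bS' [b10' [b00' [b11' ey]]]]]].
split; first exact: GM.
exists (b * b'); split; first exact: SL2_mul.
rewrite !mul2 b10 b10' b00 b00' b11 b11'.
split; first ring. split; first ring. split; first ring.
by rewrite ex ey conj_mul.
Qed.

Lemma SP_sq x : SP x -> SU (x * x).
Proof.
move=> hx; have [b [bS b10 bd ex]] := SP_form hx.
case: (diag_pm hsq hd1 hd3 hG gu (proj1 hx) bS b10 ex) => _ pm.
split; first by apply: GM; case: hx.
exists (b * b); split; first exact: SL2_mul.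
rewrite !mul2 b10 -bd.
split; first ring.
split; first by case: pm => ->; ring.
split; first by case: pm => ->; ring.
by rewrite ex conj_mul.
Qed.

Lemma SP_comm x y : SP x -> SP y -> x * y = y * x.
Proof.
move=> hx hy; have [b [bS b10 bd ex]] := SP_form hx.
have [b' [bS' b10' bd' ey]] := SP_form hy.
rewrite ex ey !conj_mul //; congr (_ * _ * _).
apply/matrixP => i j; rewrite !mul2.
by case: (I2P i) => ->; case: (I2P j) => ->; rewrite ?b10 ?b10' ?bd ?bd'; ring.
Qed.

Lemma twice (a : R) : u * (a + a) = a.
Proof. by rewrite -mulr2n -mulr_natl mulrA hu2 mul1r. Qed.

Definition resF (phi : H1 SP R) : M2 -> R :=
  fun x => if dec (SU x) then sval phi x else 0.

Lemma resP phi : (forall x y, SU x -> SU y -> resF phi (x * y) = resF phi x + resF phi y)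
  /\ (forall x, ~ SU x -> resF phi x = 0).
Proof.
rewrite /resF; split.
  move=> x y hx hy; case: (dec (G (x * y) /\ unipotent_radical_pts d g _)) => [?|h]; last by case: (h (SU_mul hx hy)).
  case: (dec (G x /\ unipotent_radical_pts d g _)) => // ?; case: (dec (G y /\ unipotent_radical_pts d g _)) => // ?.
  by apply: (proj1 (proj2_sig phi)); apply: SU_SP.
by move=> x hx; case: (dec (G x /\ unipotent_radical_pts d g _)).
Qed.

Definition res phi : H1 SU R := exist _ (resF phi) (resP phi).

Definition extF (psi : H1 SU R) : M2 -> R :=
  fun x => if dec (SP x) then u * sval psi (x * x) else 0.

Lemma extP psi : (forall x y, SP x -> SP y -> extF psi (x * y) = extF psi x + extF psi y)
  /\ (forall x, ~ SP x -> extF psi x = 0).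
Proof.
rewrite /extF; split.
  move=> x y hx hy; case: (dec (G (x * y) /\ parabolic_pts d g _)) => [?|h]; last by case: (h (SP_mul hx hy)).
  case: (dec (G x /\ parabolic_pts d g _)) => // ?; case: (dec (G y /\ parabolic_pts d g _)) => // ?.
  have -> : x * y * (x * y) = (x * x) * (y * y).
    by rewrite -!mulrA; congr (_ * _); rewrite !mulrA (SP_comm hy hx).
  by rewrite (proj1 (proj2_sig psi) _ _ (SP_sq hx) (SP_sq hy)) /= mulrDr.
by move=> x hx; case: (dec (G x /\ parabolic_pts d g _)).
Qed.

Definition ext psi : H1 SP R := exist _ (extF psi) (extP psi).

Lemma res_ext psi : res (ext psi) = psi.
Proof.
apply: H1eq => x /=; rewrite /resF.
case: (dec (G x /\ unipotent_radical_pts d g x)) => [hx|hx] /=; last by rewrite (proj2 (proj2_sig psi)).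
rewrite /extF; case: (dec (G x /\ parabolic_pts d g x)) => [hx'|h] /=; last by case: (h (SU_SP hx)).
by rewrite (proj1 (proj2_sig psi) _ _ hx hx) twice.
Qed.

Lemma ext_res phi : ext (res phi) = phi.
Proof.
apply: H1eq => x /=; rewrite /extF.
case: (dec (G x /\ parabolic_pts d g x)) => [hx|hx] /=; last by rewrite (proj2 (proj2_sig phi)).
rewrite /resF; case: (dec (G (x * x) /\ unipotent_radical_pts d g (x * x))) => [?|h] /=; last by case: (h (SP_sq hx)).
by rewrite (proj1 (proj2_sig phi) _ _ hx hx) twice.
Qed.

End Iso.

Unset Implicit Arguments.
Set Strict Implicit.

Theorem lemma4p9 (d : nat) (hd : squarefree_nat d) (hd1 : d <> 1%N)
  (hd3 : d <> 3%N) (Gamma : M2 -> Prop) (hG : arithmetic_subgroup d Gamma)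
  (g : M2) (hg : is_GL2F d g) (R : pzRingType)
  (h2 : exists u : R, u * 2%:R = 1 /\ 2%:R * u = 1) :
  exists f : H1 (fun x => Gamma x /\ parabolic_pts d g x) R ->
             H1 (fun x => Gamma x /\ unipotent_radical_pts d g x) R,
    H1_iso f.
Proof.
case: h2 => u [hu _].
have gu := proj2 hg.
exists (res hG gu).
split.
  exists (ext u hd hd1 hd3 hG gu) => phi; [exact: ext_res | exact: res_ext].
split.
  move=> phi psi chi hc x /=; rewrite /resF.
  case: (dec (Gamma x /\ unipotent_radical_pts d g x)) => ? /=; [exact: hc | by rewrite addr0].
move=> r phi chi hc x /=; rewrite /resF.
case: (dec (Gamma x /\ unipotent_radical_pts d g x)) => ? /=; [exact: hc | by rewrite mulr0].
Qed.
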